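(* Let $S\subset\mathbb{E}^d$ be a compact set such that $\operatorname{cl}(\operatorname{int} S)=S$ and $\operatorname{int} S$ is connected. Assume that $x\in S$ is a spindle peak of $S$. Then $x\in\ker_{\mathrm{s}} S$ (in particular, $S$ is spindle starshaped).
   Context: For $x,y\in\mathbb{E}^d$ the spindle $[x,y]_{\mathrm{s}}$ is the intersection of all closed unit balls containing $x$ and $y$ if $|x-y|\le2$, and $\mathbb{E}^d$ otherwise. For $p\in S$, $\operatorname{st}_{\mathrm{s}}(p)=\operatorname{st}_{\mathrm{s}}(p,S)=\{q\in S:[p,q]_{\mathrm{s}}\subseteq S\}$; $\ker_{\mathrm{s}}S=\{p\in S:\operatorname{st}_{\mathrm{s}}(p,S)=S\}$; $S$ is spindle starshaped if $\ker_{\mathrm{s}}S\ne\emptyset$. A point $x\in S$ is a spindle peak of $S$ if there is a neighborhood $U$ of $x$ such that $\operatorname{st}_{\mathrm{s}}(x',S)\subseteq\operatorname{st}_{\mathrm{s}}(x,S)$ for every $x'\in U\cap S$. *)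

(* Defs.v *)
From HB Require Import structures.
From mathcomp Require Import all_boot all_order all_algebra.
From mathcomp Require Import all_classical all_reals all_analysis.
Set Implicit Arguments. Unset Strict Implicit. Unset Printing Implicit Defensive.
Import Order.TTheory GRing.Theory Num.Theory.
Import numFieldNormedType.Exports.
Local Open Scope classical_set_scope.
Local Open Scope ring_scope.

(* Euclidean space E^d is modelled as 'rV[R]_d (R : realType) with its
   standard (product = Euclidean) topology; metric notions use the
   Euclidean norm enorm below. *)
Definition enorm (R : realType) (d : nat) (x : 'rV[R]_d) : R :=
  Num.sqrt (\sum_(i < d) x ord0 i ^+ 2).

Definition unit_cball (R : realType) (d : nat) (c : 'rV[R]_d) : set 'rV[R]_d :=
  [set z | enorm (z - c) <= 1].

Definition spindle (R : realType) (d : nat) (x y : 'rV[R]_d) : set 'rV[R]_d :=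
  if enorm (x - y) <= 2 then
    [set z | forall c, unit_cball c x -> unit_cball c y -> unit_cball c z]
  else setT.

Definition spindle_star (R : realType) (d : nat) (p : 'rV[R]_d) (S : set 'rV[R]_d)
  : set 'rV[R]_d := [set q | S q /\ spindle p q `<=` S].

Definition spindle_ker (R : realType) (d : nat) (S : set 'rV[R]_d) : set 'rV[R]_d :=
  [set p | S p /\ spindle_star p S = S].

Definition spindle_starshaped (R : realType) (d : nat) (S : set 'rV[R]_d) : Prop :=
  spindle_ker S !=set0.

Definition spindle_peak (R : realType) (d : nat) (S : set 'rV[R]_d) (x : 'rV[R]_d)
  : Prop :=
  S x /\ exists U, nbhs x U /\
    (forall x', U x' -> S x' -> spindle_star x' S `<=` spindle_star x S).

(* Main.v *)
Require Import Defs.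
From HB Require Import structures.
From mathcomp Require Import all_boot all_order all_algebra.
From mathcomp Require Import all_classical all_reals all_analysis.
From mathcomp Require Import ring lra zify.
Import Order.TTheory GRing.Theory Num.Theory.
Import numFieldNormedType.Exports.
Local Open Scope classical_set_scope.
Local Open Scope ring_scope.

Ltac vec_eq := apply/rowP => ?; rewrite !mxE; ring.


Section Eucl.
Context {R : realType} {d : nat}.
Implicit Types (u v w a b c : 'rV[R]_d).

Definition dot u v : R := \sum_(i < d) u ord0 i * v ord0 i.

Lemma dotC u v : dot u v = dot v u.
Proof. by apply: eq_bigr => i _; rewrite mulrC. Qed.

Lemma dotDl u v w : dot (u + v) w = dot u w + dot v w.
Proof. by rewrite /dot -big_split; apply: eq_bigr => i _; rewrite !mxE mulrDl. Qed.

Lemma dotZl k u v : dot (k *: u) v = k * dot u v.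
Proof. by rewrite /dot mulr_sumr; apply: eq_bigr => i _; rewrite !mxE mulrA. Qed.

Lemma dotNl u v : dot (- u) v = - dot u v.
Proof. by rewrite -scaleN1r dotZl mulN1r. Qed.

Lemma dotBl u v w : dot (u - v) w = dot u w - dot v w.
Proof. by rewrite dotDl dotNl. Qed.

Lemma dotDr u v w : dot w (u + v) = dot w u + dot w v.
Proof. by rewrite dotC dotDl !(dotC w). Qed.
Lemma dotZr k u v : dot v (k *: u) = k * dot v u.
Proof. by rewrite dotC dotZl dotC. Qed.
Lemma dotNr u v : dot v (- u) = - dot v u.
Proof. by rewrite dotC dotNl dotC. Qed.
Lemma dotBr u v w : dot w (u - v) = dot w u - dot w v.
Proof. by rewrite dotDr dotNr. Qed.

Lemma dot0l v : dot 0 v = 0.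
Proof. by rewrite /dot big1 // => i _; rewrite mxE mul0r. Qed.

Lemma dot_ge0 v : 0 <= dot v v.
Proof. by apply: sumr_ge0 => i _; rewrite -expr2 sqr_ge0. Qed.

Lemma dot_eq0 v : dot v v = 0 -> v = 0.
Proof.
move=> H; apply/rowP => i; rewrite mxE.
have := @psumr_eq0P R _ xpredT (fun i => v ord0 i * v ord0 i).
move=> /(_ (fun i _ => (ltac:(rewrite -expr2; exact: sqr_ge0)))) /(_ H i isT).
by move/eqP; rewrite mulf_eq0 orbb => /eqP.
Qed.

Lemma enormE v : enorm v = Num.sqrt (dot v v).
Proof. by rewrite /enorm /dot; congr Num.sqrt; apply: eq_bigr => i _; rewrite expr2. Qed.

Lemma enorm_ge0 v : 0 <= enorm v.
Proof. by rewrite enormE sqrtr_ge0. Qed.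

Lemma enorm_sq v : enorm v ^+ 2 = dot v v.
Proof. by rewrite enormE sqr_sqrtr // dot_ge0. Qed.

Lemma sqrt_le (X Y : R) : 0 <= Y -> X <= Y ^+ 2 -> Num.sqrt X <= Y.
Proof.
move=> Y0 XY; rewrite -(ger0_norm Y0) -sqrtr_sqr.
have [X0|X0] := leP X 0; first by rewrite ler0_sqrtr // sqrtr_ge0.
by rewrite ler_sqrt // sqr_ge0.
Qed.

Lemma enorm_leP v r : 0 <= r -> (enorm v <= r) <-> (dot v v <= r ^+ 2).
Proof.
move=> r0; split => H; last by rewrite enormE sqrt_le.
have := enorm_ge0 v; rewrite -enorm_sq; nra.
Qed.

Lemma enorm_ltP v r : 0 <= r -> (enorm v < r) <-> (dot v v < r ^+ 2).
Proof.
move=> r0; have := enorm_ge0 v; rewrite -enorm_sq => e0; split => H; first nra.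
rewrite ltNge; apply/negP => H'; nra.
Qed.

Lemma dot_comb p q u v :
  dot (p *: u + q *: v) (p *: u + q *: v) =
  p ^+ 2 * dot u u + 2 * p * q * dot u v + q ^+ 2 * dot v v.
Proof.
rewrite !(dotDl, dotDr, dotZl, dotZr) (dotC v u); ring.
Qed.

Lemma enorm_gt0 u : u != 0 -> 0 < enorm u.
Proof.
move=> u0; rewrite lt_def enorm_ge0 andbT; apply/eqP => H.
by move/eqP: u0; apply; apply: dot_eq0; rewrite -enorm_sq H expr0n.
Qed.

Lemma CS u v : dot u v <= enorm u * enorm v.
Proof.
have [->|u0] := eqVneq u 0; first by rewrite dot0l; apply: mulr_ge0; apply: enorm_ge0.
have [->|v0] := eqVneq v 0; first by rewrite dotC dot0l; apply: mulr_ge0; apply: enorm_ge0.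
have a0 := @enorm_gt0 u u0; have b0 := @enorm_gt0 v v0.
have := dot_ge0 (enorm v *: u + (- enorm u) *: v).
rewrite dot_comb -!enorm_sq => H.
move: H a0 b0; set a := enorm u; set b := enorm v; set t := dot u v => H a0 b0.
have ab0 : 0 < a * b by apply: mulr_gt0.
have H2 : 0 <= (a * b) * (a * b - t) by nra.
rewrite leNgt; apply/negP => H3.
have : 0 < (a * b) * (t - a * b) by apply: mulr_gt0; rewrite // subr_gt0.
nra.
Qed.

Lemma CSabs u v : `|dot u v| <= enorm u * enorm v.
Proof.
rewrite ler_norml CS andbT -(opprK (dot u v)) -dotNl lerN2.
have -> : enorm u = enorm (- u) by rewrite !enormE dotNl dotNr opprK.
exact: CS.
Qed.

Lemma enormD u v : enorm (u + v) <= enorm u + enorm v.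
Proof.
rewrite enormE; apply: sqrt_le; first by rewrite addr_ge0 // enorm_ge0.
have := dot_comb 1 1 u v; rewrite !scale1r => ->.
have := CS u v; rewrite -!enorm_sq; nra.
Qed.

Lemma enormZ k v : enorm (k *: v) = `|k| * enorm v.
Proof.
rewrite !enormE dotZl dotZr mulrA -expr2 sqrtrM ?sqr_ge0 // sqrtr_sqr //.
Qed.

Lemma enormN v : enorm (- v) = enorm v.
Proof. by rewrite -scaleN1r enormZ normrN1 mul1r. Qed.

Lemma enormB u v : enorm (u - v) = enorm (v - u).
Proof. by rewrite -enormN opprB. Qed.

Lemma enormBD u v w : enorm (u - w) <= enorm (u - v) + enorm (v - w).
Proof. have -> : u - w = (u - v) + (v - w) by rewrite addrA subrK. exact: enormD. Qed.

Lemma enorm0 : enorm (0 : 'rV[R]_d) = 0.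
Proof. by rewrite enormE dot0l sqrtr0. Qed.

End Eucl.



Section Spin.
Context {R : realType} {d : nat}.
Implicit Types (u v w a b c y m : 'rV[R]_d).

Lemma spindleE a b w : enorm (a - b) <= 2 ->
  spindle a b w <-> (forall c, enorm (a - c) <= 1 -> enorm (b - c) <= 1 -> enorm (w - c) <= 1).
Proof. by move=> H; rewrite /spindle H. Qed.

Lemma spindle_far a b : ~~ (enorm (a - b) <= 2) -> spindle a b = setT.
Proof. by move=> H; rewrite /spindle (negbTE H). Qed.

Lemma spindle_l a b : enorm (a - b) <= 2 -> spindle a b a.
Proof. by move=> H; apply/spindleE. Qed.

Lemma spindle_r a b : enorm (a - b) <= 2 -> spindle a b b.
Proof. by move=> H; apply/spindleE. Qed.

Lemma enorm_eq0 v : enorm v = 0 -> v = 0.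
Proof. by move=> H; apply: dot_eq0; rewrite -enorm_sq H expr0n. Qed.

Lemma spindle_ball a b y rho w : 0 <= rho -> rho <= 1 ->
  enorm (a - y) <= rho -> enorm (b - y) <= rho -> spindle a b w ->
  enorm (w - y) <= rho.
Proof.
move=> r0 r1 ay by_ /spindleE H.
have ab : enorm (a - b) <= 2.
  apply: le_trans (enormBD a y b) _; rewrite (enormB y b); lra.
move: (H ab) => {}H.
rewrite leNgt; apply/negP => wy.
set n := enorm (w - y) in wy.
have n0 : 0 < n by apply: le_lt_trans wy.
set e := n^-1 *: (w - y).
have ne : enorm e = 1.
  by rewrite /e enormZ ger0_norm ?invr_ge0 ?ltW // mulVf // gt_eqF.
set c := y - (1 - rho) *: e.
have Hc : forall z, enorm (z - y) <= rho -> enorm (z - c) <= 1.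
  move=> z zy; have -> : z - c = (z - y) + (1 - rho) *: e by vec_eq.
  apply: le_trans (enormD _ _) _; rewrite enormZ ne ger0_norm; lra.
have := H c (Hc a ay) (Hc b by_).
have -> : w - c = (n + (1 - rho)) *: e.
  rewrite /c /e; apply/rowP => i; rewrite !mxE; field; exact: lt0r_neq0.
rewrite enormZ ne ger0_norm; lra.
Qed.

Lemma spindle_pt a w : spindle a a w -> w = a.
Proof.
move=> H; have := @spindle_ball a a a 0 w (lexx _) ler01.
rewrite subrr enorm0 => /(_ (lexx _) (lexx _) H) => H1.
have : enorm (w - a) = 0 by apply/le_anti; rewrite H1 enorm_ge0.
by move/enorm_eq0/eqP; rewrite subr_eq0 => /eqP.
Qed.

Lemma spindle_trans a b v w : spindle (a + v) (b + v) w -> spindle a b (w - v).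
Proof.
have E : forall p q, enorm ((p + v) - (q + v)) = enorm (p - q).
  by move=> p q; congr enorm; vec_eq.
case: (boolP (enorm (a - b) <= 2)) => ab; last by move=> _; rewrite (@spindle_far a b ab).
move/spindleE; rewrite E => /(_ ab) H; apply/spindleE => // c ac bc.
have := H (c + v); rewrite !E => /(_ ac bc).
by have -> : w - (c + v) = (w - v) - c by vec_eq.
Qed.

Lemma axis_exists a b : a != b ->
  exists m u, [/\ dot u u = 1, a = m - (enorm (b - a) / 2) *: u &
                 b = m + (enorm (b - a) / 2) *: u].
Proof.
move=> ab; have n0 : 0 < enorm (b - a) by apply: enorm_gt0; rewrite subr_eq0 eq_sym.
exists (2^-1 *: (a + b)), ((enorm (b - a))^-1 *: (b - a)); split.
- rewrite dotZl dotZr -enorm_sq; field; exact: lt0r_neq0.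
- apply/rowP => i; rewrite !mxE; field; exact: lt0r_neq0.
- apply/rowP => i; rewrite !mxE; field; exact: lt0r_neq0.
Qed.

End Spin.



Section Region.
Context {R : realType} {d : nat}.
Implicit Types (u v w a b c y m p q : 'rV[R]_d).

Lemma dot_orth p u k : dot p u = 0 -> dot u u = 1 ->
  dot (p + k *: u) (p + k *: u) = dot p p + k ^+ 2.
Proof.
move=> pu uu; rewrite !(dotDl, dotDr, dotZl, dotZr) (dotC u p) pu uu; ring.
Qed.

Lemma dot_sub p q : dot (p - q) (p - q) = dot p p - 2 * dot p q + dot q q.
Proof. rewrite !(dotBl, dotBr) (dotC q p); ring. Qed.

Lemma dot_u u k : dot u u = 1 -> dot (k *: u) (k *: u) = k ^+ 2.
Proof. by move=> uu; rewrite dotZl dotZr uu; ring. Qed.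

Lemma perp_u z u : dot u u = 1 -> dot (z - dot z u *: u) u = 0.
Proof. by move=> uu; rewrite dotBl dotZl uu mulr1 subrr. Qed.

Lemma enorm_u u : dot u u = 1 -> enorm u = 1.
Proof. by move=> uu; rewrite enormE uu sqrtr1. Qed.

Lemma dot_le1 v : (enorm v <= 1) <-> (dot v v <= 1).
Proof. by rewrite enorm_leP ?ler01 // expr1n. Qed.

Lemma axis_len m u L : dot u u = 1 -> 0 <= L ->
  enorm ((m - L *: u) - (m + L *: u)) = 2 * L.
Proof.
move=> uu L0; have -> : (m - L *: u) - (m + L *: u) = (- (2 * L)) *: u by vec_eq.
by rewrite enormZ enorm_u // mulr1 normrN ger0_norm // mulr_ge0.
Qed.

Lemma sqrt1L (L : R) : 0 <= L -> L <= 1 ->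
  0 <= Num.sqrt (1 - L ^+ 2) /\ Num.sqrt (1 - L ^+ 2) ^+ 2 = 1 - L ^+ 2.
Proof. by move=> ? ?; split; [exact: sqrtr_ge0 | rewrite sqr_sqrtr //; nra]. Qed.

Lemma RegIn m u L w : dot u u = 1 -> 0 < L -> L <= 1 ->
  spindle (m - L *: u) (m + L *: u) w ->
  let s := dot (w - m) u in let al := enorm ((w - m) - s *: u) in
  [/\ s <= L, - L <= s & s ^+ 2 + (al + Num.sqrt (1 - L ^+ 2)) ^+ 2 <= 1].
Proof.
move=> uu L0 L1 /spindleE; rewrite axis_len //; last by apply: ltW.
move=> /(_ ltac:(lra)) H s al.
have {}H : forall c, dot (m - L *: u - c) (m - L *: u - c) <= 1 ->
   dot (m + L *: u - c) (m + L *: u - c) <= 1 -> dot (w - c) (w - c) <= 1.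
  by move=> c /dot_le1 ac /dot_le1 bc; apply/dot_le1; apply: H.
set p := (w - m) - s *: u.
have pu : dot p u = 0 by apply: perp_u.
have pp : dot p p = al ^+ 2 by rewrite enorm_sq.
have al0 : 0 <= al by apply: enorm_ge0.
have [h0 hh] := @sqrt1L L (ltW L0) L1; set h := Num.sqrt _ in h0 hh *.
have sL : s <= L.
  have := H (m + (L - 1) *: u).
  have -> : m - L *: u - (m + (L - 1) *: u) = (1 - 2 * L) *: u by vec_eq.
  have -> : m + L *: u - (m + (L - 1) *: u) = 1 *: u by vec_eq.
  have -> : w - (m + (L - 1) *: u) = p + (s + 1 - L) *: u by rewrite /p; vec_eq.
  rewrite !dot_u // dot_orth // pp => /(_ ltac:(nra) ltac:(nra)); nra.
have Ls : - L <= s.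
  have := H (m - (L - 1) *: u).
  have -> : m - L *: u - (m - (L - 1) *: u) = (- 1) *: u by vec_eq.
  have -> : m + L *: u - (m - (L - 1) *: u) = (2 * L - 1) *: u by vec_eq.
  have -> : w - (m - (L - 1) *: u) = p + (s - 1 + L) *: u by rewrite /p; vec_eq.
  rewrite !dot_u // dot_orth // pp => /(_ ltac:(nra) ltac:(nra)); nra.
split => //.
have [al00|alp] := eqVneq al 0; first by rewrite al00; nra.
have alp' : 0 < al by rewrite lt_def alp al0.
have := H (m - (h / al) *: p).
have -> : m - L *: u - (m - (h / al) *: p) = (h / al) *: p + (- L) *: u by vec_eq.
have -> : m + L *: u - (m - (h / al) *: p) = (h / al) *: p + L *: u by vec_eq.
have -> : w - (m - (h / al) *: p) = (1 + h / al) *: p + s *: u by rewrite /p; vec_eq.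
have E : forall k1 k2, dot (k1 *: p + k2 *: u) (k1 *: p + k2 *: u) = k1 ^+ 2 * al ^+ 2 + k2 ^+ 2.
  by move=> k1 k2; rewrite dot_comb pp pu uu; ring.
rewrite !E.
have -> : (h / al) ^+ 2 * al ^+ 2 = h ^+ 2 by field; exact: lt0r_neq0.
have -> : (1 + h / al) ^+ 2 * al ^+ 2 = (al + h) ^+ 2 by field; exact: lt0r_neq0.
move=> /(_ ltac:(nra) ltac:(nra)); nra.
Qed.

Lemma RegOut m u L w : dot u u = 1 -> 0 <= L -> L <= 1 ->
  let s := dot (w - m) u in let al := enorm ((w - m) - s *: u) in
  s ^+ 2 + (al + Num.sqrt (1 - L ^+ 2)) ^+ 2 <= 1 ->
  spindle (m - L *: u) (m + L *: u) w.
Proof.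
move=> uu L0 L1 s al Hw.
apply/spindleE; first by rewrite axis_len //; lra.
move=> c /dot_le1 ac /dot_le1 bc; apply/dot_le1.
set p := (w - m) - s *: u.
have pu : dot p u = 0 by apply: perp_u.
have pp : dot p p = al ^+ 2 by rewrite enorm_sq.
have al0 : 0 <= al by apply: enorm_ge0.
have [h0 hh] := @sqrt1L L L0 L1; set h := Num.sqrt (1 - L ^+ 2) in h0 hh Hw.
set sg := dot (c - m) u; set q := (c - m) - sg *: u; set be := enorm q.
have qu : dot q u = 0 by apply: perp_u.
have qq : dot q q = be ^+ 2 by rewrite enorm_sq.
have be0 : 0 <= be by apply: enorm_ge0.
move: ac bc.
have -> : m - L *: u - c = - q + (- (sg + L)) *: u by rewrite /q; vec_eq.
have -> : m + L *: u - c = - q + (L - sg) *: u by rewrite /q; vec_eq.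
have -> : w - c = (p - q) + (s - sg) *: u by rewrite /p /q; vec_eq.
have qu' : dot (- q) u = 0 by rewrite dotNl qu oppr0.
have pqu : dot (p - q) u = 0 by rewrite dotBl pu qu subrr.
rewrite !dot_orth // dotNl dotNr opprK qq => ac bc.
have -> : dot (p - q) (p - q) = al ^+ 2 - 2 * dot p q + be ^+ 2.
  by rewrite dot_sub pp qq.
have CSpq : - dot p q <= al * be.
  have := CSabs p q; rewrite -/al -/be ler_norml => /andP[H _]; lra.
have hah : h ^+ 2 <= (al + h) ^+ 2 by nra.
have sL : s ^+ 2 <= L ^+ 2 by lra.
have bh : be ^+ 2 <= h ^+ 2 by move: ac bc; rewrite hh; nra.
have bh' : be <= h by nra.
have sLa : s <= L by nra.
have sLb : - L <= s by nra.
have [sg0|sg0] := leP 0 sg.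
- have : be ^+ 2 + sg ^+ 2 + 2 * L * sg <= h ^+ 2 by nra.
  have : 0 <= (L + s) * sg by apply: mulr_ge0; lra.
  have : al * be <= al * h by apply: ler_wpM2l.
  nra.
- have : be ^+ 2 + sg ^+ 2 - 2 * L * sg <= h ^+ 2 by nra.
  have : 0 <= (L - s) * (- sg) by apply: mulr_ge0; lra.
  have : al * be <= al * h by apply: ler_wpM2l.
  nra.
Qed.

End Region.



Section Tip.
Context {R : realType} {d : nat}.
Implicit Types (u v w a b c y m p q : 'rV[R]_d).

Lemma sq_le1 (x : R) : x ^+ 2 <= 1 -> -1 <= x <= 1.
Proof. by move=> H; apply/andP; split; nra. Qed.

Lemma pert1 (s k e : R) : -1 <= s <= 1 -> - e <= k -> k <= e -> 0 <= e -> e <= 1 ->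
  (s + k) ^+ 2 <= s ^+ 2 + 3 * e.
Proof. move=> /andP[s1 s2] k1 k2 e0 e1; nra. Qed.

Lemma pert2 (X Y e : R) : 0 <= X -> X <= Y + e -> 0 <= Y -> Y <= 1 -> 0 <= e -> e <= 1 ->
  X ^+ 2 <= Y ^+ 2 + 3 * e.
Proof. move=> X0 XY Y0 Y1 e0 e1; nra. Qed.

Lemma Kreal (s' al' h h' L t r e k al : R) :
  0 < L -> L <= 1 -> 0 < t -> t < 1 -> 0 < r -> 0 <= e -> e <= 1 ->
  6 * e <= t * L ^+ 2 * r -> - e <= k -> k <= e ->
  0 <= al -> al <= al' + e -> 0 <= al' -> 0 <= h -> 0 <= h' ->
  h ^+ 2 = 1 - L ^+ 2 -> h' ^+ 2 = 1 - ((1 - t) * L) ^+ 2 ->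
  s' <= (1 - t) * L -> - ((1 - t) * L) <= s' ->
  s' ^+ 2 + (al' + h') ^+ 2 <= 1 ->
  r ^+ 2 <= (s' - (1 - t) * L) ^+ 2 + al' ^+ 2 ->
  (s' + t * L + k) ^+ 2 + (al + h) ^+ 2 <= 1.
Proof.
move=> L0 L1 t0 t1 r0 e0 e1 eb k1 k2 al0 al1 al'0 h0 h'0 hh hh' s1 s2 Hw Hr.
set L' := (1 - t) * L in hh' s1 s2 Hr.
have L'0 : 0 <= L' by rewrite /L'; nra.
have d1 : h' ^+ 2 - h ^+ 2 = t * L ^+ 2 * (2 - t) by rewrite hh hh' /L'; ring.
have hh1 : h <= h'.
  rewrite leNgt; apply/negP => H.
  have : h' ^+ 2 < h ^+ 2 by nra.
  have : 0 <= t * L ^+ 2 * (2 - t) by apply: mulr_ge0; [apply: mulr_ge0|]; nra.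
  lra.
have hle1 : h <= 1 by nra.
have h'le1 : h' <= 1 by nra.
have ii : t * L ^+ 2 <= 2 * (h' - h).
  have : (h' - h) * (h' + h) = t * L ^+ 2 * (2 - t) by rewrite -d1; ring.
  have : t * L ^+ 2 <= t * L ^+ 2 * (2 - t).
    have : 0 <= t * L ^+ 2 by apply: mulr_ge0; nra.
    nra.
  have : (h' - h) * (h' + h) <= (h' - h) * 2 by apply: ler_wpM2l; lra.
  lra.
have X0 : 0 <= L' - s' by lra.
have iii : r <= (L' - s') + al'.
  rewrite leNgt; apply/negP => H.
  have : ((L' - s') + al') ^+ 2 < r ^+ 2.
    rewrite ltrXn2r //; last by lra.
  nra.
set M := 1 - (s' + t * L) ^+ 2 - (al' + h) ^+ 2.
have iv : 2 * t * L * (L' - s') + 2 * al' * (h' - h) <= M.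
  have E : M - (2 * t * L * (L' - s') + 2 * al' * (h' - h)) =
     (1 - s' ^+ 2 - (al' + h') ^+ 2) + (h' ^+ 2 - h ^+ 2 - t * L ^+ 2 * (2 - t)).
    by rewrite /M /L'; ring.
  move: E; rewrite d1 subrr addr0 => E; lra.
have tL0 : 0 <= t * L ^+ 2 by apply: mulr_ge0; nra.
have v1 : t * L ^+ 2 * (L' - s') <= 2 * t * L * (L' - s').
  have : 0 <= (t * L * (2 - L)) * (L' - s') by apply: mulr_ge0 => //; apply: mulr_ge0; nra.
  lra.
have v2 : al' * (t * L ^+ 2) <= 2 * al' * (h' - h).
  have : 0 <= al' * (2 * (h' - h) - t * L ^+ 2) by apply: mulr_ge0; lra.
  lra.
have v3 : t * L ^+ 2 * r <= t * L ^+ 2 * ((L' - s') + al') by apply: ler_wpM2l.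
have v : t * L ^+ 2 * r <= M by lra.
have tLr : 0 <= t * L ^+ 2 * r by apply: mulr_ge0 => //; lra.
have sq1 := sqr_ge0 (s' + t * L); have sq2 := sqr_ge0 (al' + h).
have s0b : (s' + t * L) ^+ 2 <= 1 by rewrite /M in v; lra.
have Ab : (al' + h) ^+ 2 <= 1 by rewrite /M in v; lra.
have f1 := pert1 _ _ _ (sq_le1 _ s0b) k1 k2 e0 e1.
have A0 : 0 <= al' + h by lra.
have A1 := andP (sq_le1 _ Ab); case: A1 => _ A1.
have f2 := @pert2 (al + h) (al' + h) e ltac:(lra) ltac:(lra) A0 A1 e0 e1.
rewrite /M in v; lra.
Qed.

End Tip.



Section Core.
Context {R : realType} {d : nat}.
Implicit Types (u v w a b c y m p q : 'rV[R]_d).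

Lemma Kvec m u L t r w' del : dot u u = 1 -> 0 < L -> L <= 1 -> 0 < t -> t < 1 -> 0 < r ->
  spindle (m + (t * L) *: u - ((1 - t) * L) *: u) (m + (t * L) *: u + ((1 - t) * L) *: u) w' ->
  r <= enorm (w' - (m + L *: u)) ->
  enorm del <= 1 -> 6 * enorm del <= t * L ^+ 2 * r ->
  spindle (m - L *: u) (m + L *: u) (w' + del).
Proof.
move=> uu L0 L1 t0 t1 r0 Hs Hr e1 eb.
have L'0 : 0 < (1 - t) * L by apply: mulr_gt0; lra.
have L'1 : (1 - t) * L <= 1 by nra.
have := @RegIn _ _ (m + (t * L) *: u) u ((1 - t) * L) w' uu L'0 L'1 Hs.
set m' := m + (t * L) *: u.
set s' := dot (w' - m') u; set p' := w' - m' - s' *: u; set al' := enorm p'.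
move=> [s1 s2 Hw].
have p'u : dot p' u = 0 by apply: perp_u.
have pp' : dot p' p' = al' ^+ 2 by rewrite enorm_sq.
have al'0 : 0 <= al' by apply: enorm_ge0.
apply: RegOut => //; first exact: ltW.
set s := dot _ u; set al := enorm _.
set k := dot del u.
have kb : `|k| <= enorm del by have := CSabs del u; rewrite (@enorm_u _ _ u uu) mulr1.
move: kb; rewrite ler_norml => /andP[k1 k2].
have sE : s = s' + t * L + k.
  rewrite /s /s' /k.
  have -> : w' + del - m = (w' - m') + (t * L) *: u + del by rewrite /m'; vec_eq.
  by rewrite !dotDl dotZl uu mulr1.
have alb : al <= al' + enorm del.
  rewrite /al.
  have -> : w' + del - m - s *: u = p' + (del - k *: u) by rewrite sE /p' /m'; vec_eq.
  apply: le_trans (enormD _ _) _; rewrite lerD2l.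
  apply/enorm_leP; first exact: enorm_ge0.
  rewrite enorm_sq dot_sub dot_u // dotZr -/k; have := sqr_ge0 k; lra.
have Hr2 : r ^+ 2 <= (s' - (1 - t) * L) ^+ 2 + al' ^+ 2.
  have E : w' - (m + L *: u) = p' + (s' - (1 - t) * L) *: u by rewrite /p' /m'; vec_eq.
  rewrite E in Hr.
  have e0 := enorm_ge0 (p' + (s' - (1 - t) * L) *: u).
  have : r ^+ 2 <= enorm (p' + (s' - (1 - t) * L) *: u) ^+ 2 by nra.
  by rewrite enorm_sq dot_orth // pp'; lra.
have [h0 hh] := @sqrt1L _ L (ltW L0) L1.
have [h'0 hh'] := @sqrt1L _ ((1 - t) * L) (ltW L'0) L'1.
rewrite sE.
apply: (@Kreal _ s' al' (Num.sqrt (1 - L ^+ 2)) (Num.sqrt (1 - ((1 - t) * L) ^+ 2))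
   L t r (enorm del) k al) => //; try lra.
by rewrite /al; exact: enorm_ge0.
Qed.

Lemma Core (S : set 'rV[R]_d) x y0 t rho v : x != y0 -> enorm (x - y0) <= 2 ->
  0 < t -> t < 1 -> 0 < rho ->
  (forall z, enorm (z - y0) < rho -> S z) -> spindle x y0 `<=` S ->
  enorm v < rho / 2 -> enorm v <= 1 ->
  6 * enorm v <= t * (enorm (y0 - x) / 2) ^+ 2 * (rho / 2) ->
  spindle (x + t *: (y0 - x) + v) (y0 + v) `<=` S.
Proof.
move=> xy x2 t0 t1 r0 Sball Sspin v1 v2 v3 w Hw.
have [m [u [uu ex ey]]] := @axis_exists _ _ x y0 xy.
move: ex ey v3; set L := enorm (y0 - x) / 2 => ex ey v3.
have L0 : 0 < L.
  rewrite /L; apply: divr_gt0 => //; apply: enorm_gt0; rewrite subr_eq0 eq_sym //.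
have L1 : L <= 1 by rewrite /L -enormB; lra.
have Hw' := @spindle_trans _ _ _ _ _ _ Hw.
have [H|H] := ltrP (enorm (w - v - y0)) (rho / 2).
  apply: Sball; have -> : w - y0 = (w - v - y0) + v by vec_eq.
  apply: le_lt_trans (enormD _ _) _; lra.
have E1 : x + t *: (y0 - x) = m + (t * L) *: u - ((1 - t) * L) *: u.
  by rewrite ex ey; vec_eq.
have E2 : y0 = m + (t * L) *: u + ((1 - t) * L) *: u by rewrite ey; vec_eq.
rewrite E1 E2 in Hw'.
have := @Kvec m u L t (rho / 2) _ v uu L0 L1 t0 t1 ltac:(lra) Hw'.
rewrite -ey subrK -ex => /(_ H v2 v3); exact: Sspin.
Qed.

End Core.



Section Mlem.
Context {R : realType} {d : nat}.
Implicit Types (u v w a b c y m p q x : 'rV[R]_d).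

Lemma enorm_comb (k1 k2 : R) a b : 0 <= k1 -> 0 <= k2 ->
  enorm (k1 *: a + k2 *: b) <= k1 * enorm a + k2 * enorm b.
Proof.
move=> k10 k20; apply: le_trans (enormD _ _) _.
by rewrite !enormZ !ger0_norm.
Qed.

Lemma Mlem x q w lam : x != q -> enorm (x - q) <= 2 -> spindle x q w -> 0 < lam -> lam <= 1 ->
  exists w', enorm (w' - w) <= lam /\
    exists2 eta, 0 < eta & forall y, enorm (y - q) <= eta -> enorm (x - y) <= 2 -> spindle x y w'.
Proof.
move=> xq x2 Hw0 l0 l1; have Hw := (@spindleE _ _ x q w x2).1 Hw0.
have [m [u [uu ex ey]]] := @axis_exists _ _ x q xq.
move: ex ey; set L := enorm (q - x) / 2 => ex ey.
have L0 : 0 < L.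
  rewrite /L; apply: divr_gt0 => //; apply: enorm_gt0; rewrite subr_eq0 eq_sym //.
have L1 : L <= 1 by rewrite /L -enormB; lra.
have par : forall c, dot (x - c) (x - c) + dot (q - c) (q - c) = 2 * dot (c - m) (c - m) + 2 * L ^+ 2.
  move=> c.
  have -> : x - c = (-1) *: (c - m) + (- L) *: u by rewrite ex; vec_eq.
  have -> : q - c = (-1) *: (c - m) + L *: u by rewrite ey; vec_eq.
  rewrite !dot_comb uu; ring.
have xm : enorm (x - m) = L.
  by rewrite ex (_ : m - L *: u - m = (- L) *: u) ?enormZ ?enorm_u // ?normrN ?ger0_norm ?mulr1 //;
    [lra | vec_eq].
have qm : enorm (q - m) = L.
  by rewrite ey (_ : m + L *: u - m = L *: u) ?enormZ ?enorm_u // ?ger0_norm ?mulr1 //;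
    [lra | vec_eq].
have wm : enorm (w - m) <= 1 by apply: Hw; lra.
set w' := (1 - lam) *: w + lam *: m.
exists w'; split.
  have -> : w' - w = lam *: (m - w) by rewrite /w'; vec_eq.
  by rewrite enormZ ger0_norm ?(ltW l0) // enormB; nra.
have [h0 hh] := @sqrt1L _ L (ltW L0) L1; set h := Num.sqrt _ in h0 hh.
have mc : forall c, enorm (x - c) <= 1 -> enorm (q - c) <= 1 -> enorm (m - c) <= h.
  move=> c /dot_le1 xc /dot_le1 qc; apply/enorm_leP => //.
  rewrite hh (_ : m - c = (-1) *: (c - m)) ?dotZl ?dotZr; last by vec_eq.
  have := par c; lra.
have marg : forall c, enorm (x - c) <= 1 -> enorm (q - c) <= 1 -> enorm (w' - c) <= 1 - lam + lam * h.
  move=> c xc qc.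
  have -> : w' - c = (1 - lam) *: (w - c) + lam *: (m - c) by rewrite /w'; vec_eq.
  apply: le_trans (@enorm_comb (1 - lam) lam _ _ ltac:(lra) ltac:(lra)) _.
  have := Hw c xc qc; have := mc c xc qc; nra.
have h1 : h < 1.
  rewrite ltNge; apply/negP => H; have : 1 <= h ^+ 2 by nra. rewrite hh; nra.
have [L1'|L1'] := ltrP L 1.
- set al := lam * (1 - h) / 2.
  have al0 : 0 < al by rewrite /al; apply: divr_gt0 => //; apply: mulr_gt0; lra.
  have al1 : al <= 1 / 2 by rewrite /al; nra.
  exists (al * (1 - L)); first by apply: mulr_gt0; lra.
  move=> y yq xy; apply/spindleE => // c' xc' yc'.
  set c := c' + al *: (m - c').
  have qc' : enorm (q - c') <= 1 + al * (1 - L).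
    apply: le_trans (enormBD q y c') _; rewrite enormB; lra.
  have xc : enorm (x - c) <= 1.
    have -> : x - c = (1 - al) *: (x - c') + al *: (x - m) by rewrite /c; vec_eq.
    apply: le_trans (@enorm_comb (1 - al) al _ _ ltac:(lra) ltac:(lra)) _; rewrite xm; nra.
  have qc : enorm (q - c) <= 1.
    have -> : q - c = (1 - al) *: (q - c') + al *: (q - m) by rewrite /c; vec_eq.
    apply: le_trans (@enorm_comb (1 - al) al _ _ ltac:(lra) ltac:(lra)) _; rewrite qm.
    have : (1 - al) * enorm (q - c') <= (1 - al) * (1 + al * (1 - L)) by apply: ler_wpM2l; lra.
    have : 0 <= al * (al * (1 - L)) by apply: mulr_ge0; [lra| apply: mulr_ge0; lra].
    nra.
  have cc : enorm (c - c') <= 2 * al.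
    have -> : c - c' = al *: (m - c') by rewrite /c; vec_eq.
    rewrite enormZ ger0_norm ?(ltW al0) //.
    have : enorm (m - c') <= 2.
      by apply: le_trans (enormBD m x c') _; rewrite enormB xm; lra.
    nra.
  apply: le_trans (enormBD w' c c') _.
  have := marg c xc qc; rewrite /al in cc *; lra.
- have L1e : L = 1 by apply/le_anti; rewrite L1 L1'.
  exists (lam ^+ 2 / 4); first by apply: divr_gt0 => //; apply: exprn_gt0.
  move=> y yq xy; apply/spindleE => // c' xc' yc'.
  have qc' : enorm (q - c') <= 1 + lam ^+ 2 / 4.
    apply: le_trans (enormBD q y c') _; rewrite enormB; lra.
  have mc' : enorm (m - c') <= lam.
    apply/enorm_leP; first lra.
    rewrite (_ : m - c' = (-1) *: (c' - m)) ?dotZl ?dotZr; last by vec_eq.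
    have := par c'; rewrite L1e.
    move/dot_le1: xc' => xc'.
    have q0 := enorm_ge0 (q - c').
    have : dot (q - c') (q - c') <= (1 + lam ^+ 2 / 4) ^+ 2.
      by rewrite -enorm_sq; nra.
    have E : (1 + lam ^+ 2 / 4) ^+ 2 = 1 + lam ^+ 2 / 2 + lam ^+ 2 * lam ^+ 2 / 16 by field.
    have l2 : lam ^+ 2 <= 1 by apply: exprn_ile1; lra.
    have l4 : lam ^+ 2 * lam ^+ 2 <= lam ^+ 2.
      by have := ler_wpM2l (sqr_ge0 lam) l2; rewrite mulr1.
    have := sqr_ge0 lam; rewrite E expr1n; lra.
  have w'm : enorm (w' - m) <= 1 - lam.
    have -> : w' - m = (1 - lam) *: (w - m) by rewrite /w'; vec_eq.
    rewrite enormZ ger0_norm; nra.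
  apply: le_trans (enormBD w' m c') _; lra.
Qed.

End Mlem.


Section Topo.
Context {R : realType} {d : nat}.
Implicit Types (u v w a b c y m p q x z : 'rV[R]_d).

Lemma entry_le v i : `|v ord0 i| <= enorm v.
Proof.
rewrite enormE -sqrtr_sqr; apply: ler_wsqrtr.
rewrite /dot (bigD1 i) //= -expr2 lerDl; by apply: sumr_ge0 => j _; rewrite -expr2 sqr_ge0.
Qed.

Lemma nbhs_enorm y (U : set 'rV[R]_d) : nbhs y U ->
  exists2 r, 0 < r & forall z, enorm (z - y) < r -> U z.
Proof.
move/nbhs_ballP => [e e0 He]; exists e => // z zy; apply: He.
rewrite -ball_normE /= /Num.norm /= mx_normrE; apply/bigmax_ltP; split => // -[i j] _.
rewrite /= !mxE (ord1 i) distrC; apply: le_lt_trans zy.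
by have := entry_le (z - y) j; rewrite !mxE.
Qed.

Lemma enorm_nbhs y r : 0 < r -> nbhs y [set z | enorm (z - y) < r].
Proof.
move=> r0; apply/nbhs_ballP; exists (r / (d.+1)%:R).
  by apply: divr_gt0 => //; rewrite ltr0n.
move=> z; rewrite -ball_normE /= /Num.norm /= mx_normrE => /bigmax_ltP [_ H].
set e := r / (d.+1)%:R.
have e0 : 0 < e by apply: divr_gt0 => //; rewrite ltr0n.
have Hi : forall i, (z ord0 i - y ord0 i) ^+ 2 <= e ^+ 2.
  move=> i; have := H (ord0, i) isT; rewrite /= !mxE distrC ltr_norml => /andP[h1 h2].
  rewrite -/e in h1 h2; nra.
apply/enorm_ltP; first exact: ltW.
have -> : dot (z - y) (z - y) = \sum_(i < d) (z ord0 i - y ord0 i) ^+ 2.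
  by apply: eq_bigr => i _; rewrite !mxE expr2.
apply: le_lt_trans (ler_sum _ (fun i _ => Hi i)) _.
rewrite sumr_const card_ord -mulr_natr.
have er : e * (d.+1)%:R = r by rewrite /e mulfVK // pnatr_eq0.
have dd : (d%:R : R) < ((d.+1)%:R) ^+ 2 by rewrite -natrX ltr_nat; lia.
have e2 : 0 < e ^+ 2 by apply: exprn_gt0.
have rr : r ^+ 2 = e ^+ 2 * (d.+1)%:R ^+ 2 by rewrite -exprMn er.
by rewrite rr ltr_pM2l.
Qed.

End Topo.



Lemma min_l {R : realType} (a b : R) : Order.min a b <= a.
Proof. by rewrite ge_min lexx. Qed.
Lemma min_r {R : realType} (a b : R) : Order.min a b <= b.
Proof. by rewrite ge_min lexx orbT. Qed.
Lemma min_gt0 {R : realType} (a b : R) : 0 < a -> 0 < b -> 0 < Order.min a b.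
Proof. by move=> ? ?; rewrite lt_min; apply/andP. Qed.

Theorem theorem4 (R : realType) (d : nat) (S : set 'rV[R]_d) (x : 'rV[R]_d) :
  compact S -> closure (interior S) = S -> connected (interior S) ->
  spindle_peak S x ->
  spindle_ker S x /\ spindle_starshaped S.
Proof.
move=> _ Scl Icon [Sx [U [Ux peak]]].
suff Hk : spindle_ker S x by split => //; exists x.
split => //; apply/seteqP; split => [q [] //|q Sq]; split => //.
have [ST|NST] := pselect (S = setT); first by rewrite ST.
have R2 : forall p q, spindle p q `<=` S -> enorm (p - q) <= 2.
  move=> p q' H; case: (boolP (enorm (p - q') <= 2)) => // H2; exfalso; apply: NST.
  apply/seteqP; split => // z _; apply: H; by rewrite (spindle_far _ _ H2).
have SI : forall z, interior S z -> S z by move=> z; apply: interior_subset.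
have [rU rU0 HU] := @nbhs_enorm _ _ _ _ Ux.
have peakR : forall x' q', enorm (x' - x) < rU -> S x' -> S q' ->
    spindle x' q' `<=` S -> spindle x q' `<=` S.
  by move=> x' q' H1 H2 H3 H4; have [] := peak x' (HU _ H1) H2 q' (conj H3 H4).
have spt : forall p, S p -> spindle p p `<=` S by move=> p Sp w /spindle_pt ->.
have O : forall y, interior S y -> exists2 eps, 0 < eps & forall y0 z,
    enorm (y0 - y) < eps -> enorm (z - y) < eps -> spindle x y0 `<=` S -> spindle x z `<=` S.
  move=> y Iy; have [r r0 Hr] := @nbhs_enorm _ _ _ _ Iy.
  have [yx|yx] := eqVneq y x.
    rewrite yx in Hr *; exists (Order.min r 1); first exact: min_gt0.
    move=> y0 z _ zx _ w Hw; apply: Hr.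
    have m1 := min_l r 1; have m2 := min_r r 1.
    have := @spindle_ball _ _ x z x (enorm (z - x)) w (enorm_ge0 _) ltac:(lra).
    rewrite subrr enorm0 => /(_ (enorm_ge0 _) (lexx _) Hw); lra.
  set L0 := enorm (y - x) / 2.
  have L00 : 0 < L0.
    by apply: divr_gt0 => //; apply: enorm_gt0; rewrite subr_eq0.
  set t := Order.min (1 / 2) (rU / 4).
  have t0 : 0 < t by apply: min_gt0; lra.
  have t1 : t <= 1 / 2 by apply: min_l.
  have t2 : t <= rU / 4 by apply: min_r.
  have tLr : 0 < t * L0 ^+ 2 * r / 192.
    by apply: divr_gt0 => //; apply: mulr_gt0 => //; apply: mulr_gt0 => //; apply: exprn_gt0.
  set eps := Order.min (r / 8) (Order.min (1 / 2) (Order.min (t * L0 ^+ 2 * r / 192)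
              (Order.min (rU / 8) L0))).
  have e0 : 0 < eps.
    apply: min_gt0; first lra; apply: min_gt0; first lra.
    by apply: min_gt0 => //; apply: min_gt0 => //; lra.
  have e1 : eps <= r / 8 by apply: min_l.
  have e2 : eps <= 1 / 2 by apply: le_trans (min_r _ _) (min_l _ _).
  have e3 : eps <= t * L0 ^+ 2 * r / 192.
    by apply: le_trans (min_r _ _) _; apply: le_trans (min_r _ _) (min_l _ _).
  have e4 : eps <= rU / 8.
    apply: le_trans (min_r _ _) _; apply: le_trans (min_r _ _) _.
    by apply: le_trans (min_r _ _) (min_l _ _).
  have e5 : eps <= L0.
    apply: le_trans (min_r _ _) _; apply: le_trans (min_r _ _) _.
    by apply: le_trans (min_r _ _) (min_r _ _).
  exists eps => // y0 z y0y zy H0.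
  have x2 := R2 _ _ H0.
  have dy : L0 <= enorm (y0 - x).
    have := enormBD y y0 x; rewrite (enormB y y0) -/(enorm (y - x)).
    have : enorm (y - x) = 2 * L0 by rewrite /L0; field.
    lra.
  have xy0 : x != y0.
    apply/negP => /eqP E; move: dy; rewrite E subrr enorm0; lra.
  set v := z - y0.
  have vb : enorm v < 2 * eps.
    have -> : v = (z - y) + (y - y0) by rewrite /v; vec_eq.
    apply: le_lt_trans (enormD _ _) _; rewrite (enormB y y0); lra.
  have Lsq : L0 ^+ 2 / 4 <= (enorm (y0 - x) / 2) ^+ 2.
    have := enorm_ge0 (y0 - x); nra.
  have b6 : 6 * enorm v <= t * (enorm (y0 - x) / 2) ^+ 2 * (r / 2 / 2).
    have : t * (L0 ^+ 2 / 4) * (r / 2 / 2) <= t * (enorm (y0 - x) / 2) ^+ 2 * (r / 2 / 2).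
      apply: ler_wpM2r; first lra.
      by apply: ler_wpM2l => //; apply: ltW.
    have : 6 * enorm v <= t * (L0 ^+ 2 / 4) * (r / 2 / 2).
      have : 12 * eps <= t * L0 ^+ 2 * r / 16 by lra.
      have E : t * (L0 ^+ 2 / 4) * (r / 2 / 2) = t * L0 ^+ 2 * r / 16 by field.
      rewrite E; lra.
    lra.
  have Sball : forall z', enorm (z' - y0) < r / 2 -> S z'.
    move=> z' zz; apply: Hr; apply: le_lt_trans (enormBD z' y0 y) _; lra.
  have HC := @Core _ _ S x y0 t (r / 2) v xy0 x2 t0 ltac:(lra) ltac:(lra) Sball H0
    ltac:(lra) ltac:(lra) b6.
  have E : y0 + v = z by rewrite /v; vec_eq.
  rewrite E in HC.
  set x' := x + t *: (y0 - x) + v in HC.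
  have x'x : enorm (x' - x) < rU.
    have -> : x' - x = t *: (y0 - x) + v by rewrite /x'; vec_eq.
    apply: le_lt_trans (enormD _ _) _; rewrite enormZ ger0_norm ?(ltW t0) //.
    rewrite enormB; have : t * enorm (x - y0) <= t * 2 by apply: ler_wpM2l => //; apply: ltW.
    lra.
  have Sx' : S x'.
    apply: HC; apply: spindle_l.
    have -> : x' - z = (1 - t) *: (x - y0) by rewrite /x' /v; vec_eq.
    rewrite enormZ ger0_norm; last lra.
    have : 0 <= enorm (x - y0) by apply: enorm_ge0.
    nra.
  have Sz : S z by apply: Hr; lra.
  exact: (peakR x' z x'x Sx' Sz HC).
set I := interior S.
set A := [set y | I y /\ spindle x y `<=` S].
have AI : A = I.
  apply: Icon.
  - have : closure I x by rewrite /I Scl.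
    move=> /(_ _ (@enorm_nbhs _ _ x rU rU0)) [y [Iy yx]].
    exists y; split => //; apply: (peakR y y) => //; try exact: SI.
    exact: spt (SI _ Iy).
  - exists A; last by apply/seteqP; split => [y Ay|y [_ Ay]] //; split => //; case: Ay.
    rewrite openE => y [Iy Hy].
    have [e e0 He] := O y Iy.
    have nI : nbhs y I by apply: nbhs_interior.
    have [r' r'0 Hr'] := @nbhs_enorm _ _ _ _ nI.
    have Hn := @enorm_nbhs _ _ y (Order.min e r') (min_gt0 _ _ e0 r'0).
    apply: (filterS _ Hn) => z zy.
    have m1 := min_l e r'; have m2 := min_r e r'.
    move: zy => /= zy.
    split; first by apply: Hr'; lra.
    apply: (He y z _ _ Hy); first by rewrite subrr enorm0.
    lra.
  - exists (closure A); first exact: closed_closure.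
    apply/seteqP; split => [y Ay | y [Iy cAy]].
      by split; [case: Ay | exact: subset_closure].
    have [e e0 He] := O y Iy.
    have [y0 [[Iy0 Ay0] y0y]] := cAy _ (@enorm_nbhs _ _ y e e0).
    split => //; apply: (He y0 y) => //; rewrite subrr enorm0 //.
have Rint : forall y, I y -> spindle x y `<=` S.
  by move=> y Iy; rewrite -AI in Iy; case: Iy.
have qcl : closure I q by rewrite /I Scl.
have [->|xq] := eqVneq q x; first exact: spt.
have x2 : enorm (x - q) <= 2.
  rewrite leNgt; apply/negP => H.
  have g0 : 0 < enorm (x - q) - 2 by lra.
  have [y [Iy yq]] := qcl _ (@enorm_nbhs _ _ q _ g0).
  move: yq => /= yq; have := R2 _ _ (Rint y Iy); have := enormBD x y q; lra.
have Scl' : closed S by rewrite -Scl; exact: closed_closure.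
move=> w Hw.
have : closure S w.
  move=> B Bw; have [e e0 He] := @nbhs_enorm _ _ _ _ Bw.
  set lam := Order.min (e / 2) 1.
  have l0 : 0 < lam by apply: min_gt0; lra.
  have l1 : lam <= 1 by apply: min_r.
  have l2 : lam <= e / 2 by apply: min_l.
  have [w' [w'w [eta eta0 Heta]]] := @Mlem _ _ x q w lam ltac:(by rewrite eq_sym) x2 Hw l0 l1.
  have [y [Iy yq]] := qcl _ (@enorm_nbhs _ _ q eta eta0).
  move: yq => /= yq.
  exists w'; split.
  - by apply: (Rint y Iy); apply: Heta; [exact: ltW | exact: R2 _ _ (Rint y Iy)].
  - by apply: He; lra.
by rewrite -(closure_id S).1.
Qed.
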